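(* Let $M\in\mathbb{N}_0$ and $N\in\mathbb{N}$ with $N\le\lfloor M/2\rfloor+1$. Let $U_{(N,M)}\in\mathbb{R}^{N\times N}$ be the upper triangular matrix with entries $(U_{(N,M)})_{N-\ell,N-\ell-k}=0$ for $1\le k\le N-1-\ell$, and $$(U_{(N,M)})_{N-\ell,N-\ell+k}=\frac{1}{(2k+1)2^{2k}}\binom{M-2\ell+2k}{2k},\qquad 0\le k\le\ell,$$ for $0\le\ell\le N-1$ (so the diagonal entries, $k=0$, equal $1$). Then $U_{(N,M)}^{-1}$ is upper unitriangular with entries $(U^{-1}_{(N,M)})_{N-\ell,N-\ell-k}=0$ for $1\le k\le N-1-\ell$ and $$(U^{-1}_{(N,M)})_{N-\ell,N-\ell+k}=\tau_{2k}\frac{(M-2\ell+2k)!}{(M-2\ell)!},\qquad 0\le k\le\ell,\ 0\le\ell\le N-1,$$ where $\tau_0=1$ and $\tau_{2k}=\sum_{s=0}^{k-1}\frac{-\tau_{2s}}{2^{2k-2s}(2k-2s+1)!}$ for $k>0$. *)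

(* Defs.v *)
From HB Require Import structures.
From mathcomp Require Import all_boot all_order all_algebra.
Set Implicit Arguments. Unset Strict Implicit. Unset Printing Implicit Defensive.
Import Order.TTheory GRing.Theory Num.Theory.
Local Open Scope ring_scope.

(* Indices: the paper uses 1-based indices 1..N; here 'I_N is 0-based.
   Row N-l (1-based) is row i = N-1-l (0-based), i.e. l = N-1-i;
   column N-l+k (1-based) is column j = i+k, i.e. k = j-i. *)

Fixpoint taus (R : fieldType) (n : nat) : seq R :=
  match n with
  | 0 => [:: 1]
  | n'.+1 =>
      let t := taus R n' in
      rcons t (\sum_(s < n'.+1)
                 (- nth 0 t s) /
                 ((2 ^+ (2 * (n'.+1 - s))) * ((2 * (n'.+1 - s) + 1)`!)%:R))
  end.

(* tau R k = tau_{2k} of the paper *)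
Definition tau (R : fieldType) (k : nat) : R := nth 0 (taus R k) k.

Definition Umx (R : fieldType) (N M : nat) : 'M[R]_N :=
  \matrix_(i < N, j < N)
    if (i <= j)%N then
      let l := (N - 1 - i)%N in let k := (j - i)%N in
      ('C(M - 2 * l + 2 * k, 2 * k))%:R / (((2 * k + 1)%:R) * 2 ^+ (2 * k))
    else 0.

Definition Uinvmx (R : fieldType) (N M : nat) : 'M[R]_N :=
  \matrix_(i < N, j < N)
    if (i <= j)%N then
      let l := (N - 1 - i)%N in let k := (j - i)%N in
      tau R k * (((M - 2 * l + 2 * k)`!)%:R / ((M - 2 * l)`!)%:R)
    else 0.

(* Main.v *)
Require Import Defs.
From HB Require Import structures.
From mathcomp Require Import all_boot all_order all_algebra.
From mathcomp Require Import ring zify.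
Import Order.TTheory GRing.Theory Num.Theory.
Local Open Scope ring_scope.

Lemma size_taus (R : fieldType) n : size (taus R n) = n.+1.
Proof. by elim: n => //= n IH; rewrite size_rcons IH. Qed.

Lemma nth_taus (R : fieldType) n s : (s <= n)%N -> nth 0 (taus R n) s = tau R s.
Proof.
elim: n => [|n IH]; first by rewrite leqn0 => /eqP ->.
rewrite leq_eqVlt => /orP[/eqP -> //|Hs].
by rewrite /= nth_rcons size_taus Hs IH.
Qed.

Lemma tau_rec (R : fieldType) n : tau R n.+1 =
  \sum_(0 <= s < n.+1) (- tau R s) / (2 ^+ (2 * (n.+1 - s)) * ((2 * (n.+1 - s) + 1)`!)%:R).
Proof.
rewrite big_mkord /tau /= nth_rcons size_taus ltnn eqxx.
by apply: eq_bigr => s _; rewrite nth_taus // -ltnS.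
Qed.

Lemma key (R : realFieldType) n :
  \sum_(0 <= p < n.+1) tau R (n - p) / (((2 * p + 1)`!)%:R * 2 ^+ (2 * p)) = (n == 0%N)%:R.
Proof.
rewrite big_nat_rev /= add0n.
rewrite (@eq_big_nat _ _ _ 0 n.+1 _ (fun s => tau R s / (((2 * (n - s)+1)`!)%:R * 2 ^+ (2 * (n - s))))); last first.
  by move=> p /andP[_ Hp]; rewrite subSS subKn.
rewrite big_nat_recr //= subnn muln0 add0n.
rewrite factS fact0 expr0 mulr1 divr1.
case: n => [|n]; first by rewrite big_geq // add0r /tau.
rewrite tau_rec -big_split /=.
apply: big1_seq => s _; rewrite mulrC [_ * 2 ^+ _]mulrC mulNr.
by rewrite [X in X + _]mulrC subrr.
Qed.

Lemma prod1 (R : realFieldType) (M N : nat) (hN : (0 < N)%N)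
  (hNM : (N <= M./2 + 1)%N) :
  Umx R N M *m Uinvmx R N M = 1%:M.
Proof.
have hM : (2 * (N - 1) <= M)%N.
  have := odd_double_half M; rewrite -muln2; lia.
apply/matrixP => i j; rewrite !mxE.
pose F (m : nat) : R :=
  (if (i <= m)%N then ('C(M - 2 * (N - 1 - i) + 2 * (m - i), 2 * (m - i)))%:R
      / ((2 * (m - i) + 1)%:R * 2 ^+ (2 * (m - i))) else 0) *
  (if (m <= j)%N then tau R (j - m) * (((M - 2 * (N - 1 - m) + 2 * (j - m))`!)%:R
      / ((M - 2 * (N - 1 - m))`!)%:R) else 0).
rewrite (eq_bigr (fun k : 'I_N => F k)); last by move=> k _; rewrite !mxE.
rewrite -(big_mkord xpredT F).
have hi := ltn_ord i; have hj := ltn_ord j.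
case: (leqP i j) => hij; last first.
  rewrite big1_seq; last first.
    move=> m _; rewrite /F; case: (leqP i m) => h1; last by rewrite mul0r.
    by rewrite ifN ?mulr0 // -ltnNge; apply: leq_trans hij h1.
  suff /negbTE -> : i != j by [].
  by apply/eqP => e; move: hij; rewrite e ltnn.
rewrite (@big_cat_nat _ _ _ i) //=; last exact: ltnW.
rewrite big1_seq ?add0r; last first.
  by move=> m; rewrite mem_index_iota => /andP[_ Hm]; rewrite /F ifN ?mul0r // -ltnNge.
rewrite (@big_cat_nat _ _ _ j.+1) //=; last by apply: leqW.
rewrite [X in _ + X]big1_seq ?addr0; last first.
  move=> m; rewrite mem_index_iota => /andP[_ /andP[Hm _]]; rewrite /F /=. have -> : (m <= j)%N = false by rewrite leqNgt Hm. by rewrite mulr0.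
rewrite (_ : \sum_(i <= m < j.+1) F m = \sum_(0 + i <= m < j.+1) F m) // big_addn.
set b := (M - 2 * (N - 1 - i))%N.
set n := (j - i)%N.
have -> : (j.+1 - i = n.+1)%N by rewrite /n; lia.
rewrite (@eq_big_nat _ _ _ 0 n.+1 _ (fun p => ((b + 2 * n)`!)%:R / (b`!)%:R *
   (tau R (n - p) / (((2 * p + 1)`!)%:R * 2 ^+ (2 * p))))); last first.
  move=> p /andP[_ Hp].
  rewrite /F leq_addl ifT; last by rewrite /n in Hp; lia.
  have e1 : (p + i - i = p)%N by lia.
  have e2 : (j - (p + i) = n - p)%N by rewrite /n; lia.
  have e3 : (M - 2 * (N - 1 - (p + i)) = b + 2 * p)%N by rewrite /b; rewrite /n in Hp; lia.
  have e4 : (M - 2 * (N - 1 - i) + 2 * p = b + 2 * p)%N by [].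
  have e5 : (b + 2 * p + 2 * (n - p) = b + 2 * n)%N by lia.
  rewrite e1 e2 e3 e4 e5.
  have hc := bin_fact (leq_addl b (2 * p)).
  rewrite addnK in hc.
  rewrite -hc addn1 factS !natrM.
  have hC : ('C(b + 2 * p, 2 * p))%:R != 0 :> R by rewrite pnatr_eq0 -lt0n bin_gt0 leq_addl.
  have hF1 : ((2 * p)`!)%:R != 0 :> R by rewrite pnatr_eq0 -lt0n fact_gt0.
  have hF2 : (b`!)%:R != 0 :> R by rewrite pnatr_eq0 -lt0n fact_gt0.
  have hS : ((2 * p).+1)%:R != 0 :> R by rewrite pnatr_eq0.
  have h2 : (2 : R) ^+ (2 * p) != 0 by rewrite expf_neq0 // pnatr_eq0.
  field.
  by rewrite h2 hF1 hF2 hC /= andbT -natrM addrC natr1 pnatr_eq0.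
rewrite -mulr_sumr key.
case: eqP => hn.
  have -> : i = j by apply/val_inj; rewrite /n in hn; simpl; lia.
  rewrite eqxx hn muln0 addn0 mulr1 divff // pnatr_eq0 -lt0n fact_gt0 //.
rewrite /= mulr0; have /negbTE -> : i != j by apply/eqP => e; apply: hn; rewrite /n e subnn.
by [].
Qed.

Theorem lemma5 (R : realFieldType) (M N : nat) (hN : (0 < N)%N)
  (hNM : (N <= M./2 + 1)%N) :
  Umx R N M \in unitmx /\ invmx (Umx R N M) = Uinvmx R N M.
Proof.
have hP := @prod1 R M N hN hNM.
have [hU _] := mulmx1_unit hP.
split => //.
by rewrite -[RHS](mulKmx hU) hP mulmx1.
Qed.
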